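(* Let $p\in\mathbb N$, let $U_j\ne0$, $j=1,2,\dots$, be given numbers, and let numbers $F_j$, $j\ge -p$, satisfy $F_{-p}=\dots=F_p=1$ and $$U_j=\frac{F_{j-p-1}F_{j+p}}{F_{j-1}F_j},\qquad j=1,2,\dots.$$ Then $$F_j=\prod_{i=1}^j U_i^{\lfloor\frac{j-i}{p}\rfloor-\lfloor\frac{j-i}{p+1}\rfloor},\qquad j=1,2,\dots.$$ *)

(* Defs.v *)
From HB Require Import structures.
From mathcomp Require Import all_boot all_order all_algebra.
Set Implicit Arguments. Unset Strict Implicit. Unset Printing Implicit Defensive.

(* Main.v *)
Require Import Defs.
From mathcomp Require Import all_boot all_order all_algebra.
From mathcomp Require Import zify.
Import Order.TTheory GRing.Theory Num.Theory.
Lemma divD1 p k : 0 < p -> (k + p) %/ p = k %/ p + 1.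
Proof. by move=> p0; have := divnDMl 1 k p0; rewrite mul1n. Qed.
Local Open Scope ring_scope.
Definition ee (p m : nat) : int := (m %/ p)%:Z - (m %/ p.+1)%:Z.
Lemma key_m p m : (0 < p)%N -> ee p (m+p) + (if (p.+1 <= m)%N then ee p (m-p-1) else 0)
  = ((m==0%N):nat)%:Z + (if (1<=m)%N then ee p (m-1) else 0) + ee p m.
Proof.
move=> p0; rewrite /ee.
case: m => [|k].
  rewrite /= add0n divnn p0 divn_small ?ltnSn // div0n.
  by rewrite div0n.
have h1 : ((k.+1 + p) %/ p = k.+1 %/ p + 1)%N by rewrite divD1.
have h2 : ((k.+1 + p) %/ p.+1 = k %/ p.+1 + 1)%N by rewrite addSnnS divD1.
rewrite h1 h2 (_ : (k.+1 - 1 = k)%N); last by lia.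
rewrite ltnS [(1 <= _)%N]ltn0Sn.
case: (leqP p k) => hk.
  rewrite (_ : (k.+1 - p - 1 = k - p)%N); last by lia.
  have h3 : (k %/ p = (k - p) %/ p + 1)%N by rewrite -divD1 // subnK.
  have h4 : (k.+1 %/ p.+1 = (k - p) %/ p.+1 + 1)%N by rewrite -divD1 // addnS subnK.
  rewrite h3 h4.
  move: (k.+1 %/ p)%N (k %/ p.+1)%N ((k-p) %/ p)%N ((k-p) %/ p.+1)%N => a b c d; clear h1 h2 h3 h4.
  lia.
rewrite (divn_small hk) (divn_small (m:=k.+1) (d:=p.+1)) //.
move: (k.+1 %/ p)%N (k %/ p.+1)%N => a b; clear h1 h2.
lia.
Qed.

Definition EE p k i : int := if (i <= k)%N then ee p (k - i) else 0.

Lemma key p j i : (0 < p)%N -> (1 <= j)%N ->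
  EE p (j+p) i + (if (p < j)%N then EE p (j-p-1) i else 0)
  = ((i==j):nat)%:Z + EE p (j-1) i + EE p j i.
Proof.
move=> p0 j1; rewrite /EE.
case: (leqP i j) => hij.
  have := @key_m p (j - i) p0.
  rewrite (_ : (i <= j + p)%N = true); last by lia.
  rewrite (_ : (j + p - i = j - i + p)%N); last by lia.
  move=> H.
  rewrite (_ : (i == j) = ((j - i)%N == 0%N)); last by apply/eqP/eqP; lia.
  rewrite (_ : (i <= j - 1)%N = (0 < j - i)%N); last by apply/idP/idP; lia.
  rewrite (_ : (j - 1 - i = j - i - 1)%N); last by lia.
  case: (ltnP p j) => hpj.
    rewrite (_ : (i <= j - p - 1)%N = (p < j - i)%N); last by apply/idP/idP; lia.
    rewrite (_ : (j - p - 1 - i = j - i - p - 1)%N); last by lia.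
    exact H.
  rewrite (_ : (p < j - i)%N = false) in H; last by lia.
  exact H.
rewrite (_ : (i <= j - 1)%N = false); last by lia.
rewrite (_ : (i == j) = false); last by apply/eqP; lia.
rewrite (_ : (if (p < j)%N then (if (i <= j - p - 1)%N then ee p (j - p - 1 - i) else 0) else 0) = 0);
  last by case: ifP => // _; rewrite ifF //; lia.
case: ifP => // h.
rewrite /ee !divn_small //; lia.
Qed.

Section Main.
Variables (R : fieldType) (p : nat) (U : nat -> R) (F : int -> R) (N : nat).
Hypothesis p0 : (0 < p)%N.
Hypothesis hU : forall j : nat, (1 <= j)%N -> U j != 0.
Hypothesis hF : forall j : int, - (p%:Z) <= j <= p%:Z -> F j = 1.
Hypothesis hrec : forall j : nat, (1 <= j)%N ->
     U j = F (j%:Z - p%:Z - 1) * F (j%:Z + p%:Z) / (F (j%:Z - 1) * F j%:Z).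

Definition P (e : nat -> int) := \prod_(1 <= i < N.+1) U i ^ e i.

Lemma PM e1 e2 : P e1 * P e2 = P (fun i => e1 i + e2 i).
Proof.
rewrite /P -big_split; apply: eq_big_nat => i /andP[hi _].
by rewrite expfzDr // hU.
Qed.

Lemma P0 : P (fun _ => 0) = 1.
Proof. by rewrite /P big1 // => i _; rewrite expr0z. Qed.

Lemma P1 j : (1 <= j <= N)%N -> P (fun i => ((i == j) : nat)%:Z) = U j.
Proof.
move=> /andP[j1 jN].
rewrite /P (bigD1_seq j) /=; last by rewrite iota_uniq.
  by rewrite eqxx expr1z big1 ?mulr1 // => i /negbTE ->; rewrite expr0z.
by rewrite mem_index_iota j1 ltnS.
Qed.

Lemma main n : (n <= N)%N -> F n%:Z = P (EE p n).
Proof.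
elim/ltn_ind: n => n IH nN.
case: (leqP n p) => hnp.
  rewrite hF; last by apply/andP; split; lia.
  rewrite /P big1_seq // => i /andP[_]; rewrite mem_index_iota => /andP[i1 _]; rewrite /EE; case: ifP => h; last by rewrite expr0z.
  by rewrite /ee !divn_small ?subrr ?expr0z //; lia.
set j := (n - p)%N.
have hn : n = (j + p)%N by rewrite /j subnK // ltnW.
have j1 : (1 <= j)%N by lia.
have := @hrec j j1.
rewrite -PoszD -hn.
have e1 : j%:Z - 1 = (j - 1)%N%:Z by lia.
rewrite e1.
set A := F (j%:Z - p%:Z - 1).
set C := F (j - 1)%N.
set D := F j.
move=> hUj.
have hUj0 := @hU j j1.
have hA : A != 0.
  by apply: contraNneq hUj0 => hA0; rewrite hUj hA0 !mul0r.
have hCD : C * D != 0.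
  by apply: contraNneq hUj0 => h0; rewrite hUj h0 invr0 mulr0.
have eB : F n = U j * (C * D) / A.
  by rewrite hUj divfK // mulrC mulKf.
have hC : C = P (EE p (j - 1)) by rewrite /C IH //; lia.
have hD : D = P (EE p j) by rewrite /D IH //; lia.
have hA' : A = P (fun i => if (p < j)%N then EE p (j - p - 1) i else 0).
  case: (ltnP p j) => hpj.
    have e2 : j%:Z - p%:Z - 1 = (j - p - 1)%N%:Z by lia.
    by rewrite /A e2 IH //; lia.
  by rewrite P0 /A hF //; apply/andP; split; lia.
rewrite eB -[P (EE p n)](mulfK hA); congr (_ / _).
rewrite hC hD hA' -(@P1 j); last by apply/andP; split; lia.
rewrite !PM hn /P; apply: eq_bigr => i _.
by rewrite key // addrA.
Qed.

End Main.

Theorem proposition5 (R : fieldType) (p : nat) (U : nat -> R) (F : int -> R) :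
  (0 < p)%N ->
  (forall j : nat, (1 <= j)%N -> U j != 0) ->
  (forall j : int, - (p%:Z) <= j <= p%:Z -> F j = 1) ->
  (forall j : nat, (1 <= j)%N ->
     U j = F (j%:Z - p%:Z - 1) * F (j%:Z + p%:Z) / (F (j%:Z - 1) * F j%:Z)) ->
  forall j : nat, (1 <= j)%N ->
    F j%:Z = \prod_(1 <= i < j.+1)
               U i ^ (((j - i) %/ p)%N%:Z - ((j - i) %/ p.+1)%N%:Z).
Proof.
move=> p0 hU hF hrec j j1.
rewrite (@main R p U F j p0 hU hF hrec j (leqnn j)) /P.
apply: eq_big_nat => i /andP[_ hi].
by rewrite /EE ltnS in hi *; rewrite hi.
Qed.
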